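(* If a generalised binary matrix $\mathbf{Y}$ is minimally non-firm, then every row and every column of $\mathbf{Y}$ contains at least two non-zero entries (entries equal to $1$ or $?$).
   Context: A generalised binary matrix is a matrix with entries in $\{0,1,?\}$. For such $\mathbf{Y}$, $\mathrm{supp}(\mathbf{Y})=\{(i,j):y_{i,j}=1\}$. A submatrix indexed by $I\times J$ is obtained by deleting rows not in $I$ and columns not in $J$; it is proper if it omits at least one row or column. A rectangle of $\mathbf{Y}$ is a set $I\times J$ of positions containing no entry equal to $0$. An isolated set is a subset of $\mathrm{supp}(\mathbf{Y})$ no two distinct elements of which lie in a common rectangle; $i(\mathbf{Y})$ is the maximum size of an isolated set. $br(\mathbf{Y})$ is the minimum number of rectangles whose union contains $\mathrm{supp}(\mathbf{Y})$ ($?$ entries need not be covered). $\mathbf{Y}$ is minimally non-firm if $i(\mathbf{Y})<br(\mathbf{Y})$ and $i(\mathbf{Y}')=br(\mathbf{Y}')$ for every proper submatrix $\mathbf{Y}'$ of $\mathbf{Y}$. *)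

(* Defs.v *)
From mathcomp Require Import all_boot all_algebra.
Set Implicit Arguments. Unset Strict Implicit. Unset Printing Implicit Defensive.

(* Entries of a generalised binary matrix: 0, 1 or ? *)
Inductive gentry := GZero | GOne | GUnk.

Definition is_zero (e : gentry) : bool := if e is GZero then true else false.
Definition is_one (e : gentry) : bool := if e is GOne then true else false.

Definition gbm (m n : nat) := 'M[gentry]_(m, n).

Section GBM.
Variables (m n : nat).
Implicit Type Y : gbm m n.

Definition supp Y : {set 'I_m * 'I_n} := [set p | is_one (Y p.1 p.2)].

Definition is_rect Y (A : {set 'I_m}) (B : {set 'I_n}) : bool :=
  [forall i in A, forall j in B, ~~ is_zero (Y i j)].

Definition common_rect Y (p q : 'I_m * 'I_n) : bool :=
  [exists A : {set 'I_m}, exists B : {set 'I_n},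
     [&& is_rect Y A B, p.1 \in A, q.1 \in A, p.2 \in B & q.2 \in B]].

Definition isolated Y (S : {set 'I_m * 'I_n}) : bool :=
  (S \subset supp Y) &&
  [forall p in S, forall q in S, (p != q) ==> ~~ common_rect Y p q].

Definition iso_num Y : nat := \max_(S : {set 'I_m * 'I_n} | isolated Y S) #|S|.

Definition rect_cover Y (F : {set {set 'I_m} * {set 'I_n}}) : bool :=
  [forall R in F, is_rect Y R.1 R.2] &&
  [forall p in supp Y, exists R in F, (p.1 \in R.1) && (p.2 \in R.2)].

(* br(Y): minimum number of rectangles covering supp(Y).  The covering by
   1x1 rectangles has size #|supp Y|, so #|supp Y| is a valid default. *)
Definition br Y : nat :=
  \big[minn/#|supp Y|]_(F : {set {set 'I_m} * {set 'I_n}} | rect_cover Y F) #|F|.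

End GBM.

Definition submx_gbm (m n : nat) (Y : gbm m n) (I : {set 'I_m}) (J : {set 'I_n})
  : gbm #|I| #|J| :=
  (\matrix_(i, j) Y (enum_val i) (enum_val j))%R.

Definition proper_sub (m n : nat) (I : {set 'I_m}) (J : {set 'I_n}) : bool :=
  (I != setT) || (J != setT).

Definition minimally_non_firm (m n : nat) (Y : gbm m n) : Prop :=
  iso_num Y < br Y /\
  forall (I : {set 'I_m}) (J : {set 'I_n}), proper_sub I J ->
    iso_num (submx_gbm Y I J) = br (submx_gbm Y I J).

(* Main.v *)
Require Import Defs.
From mathcomp Require Import all_boot all_algebra.
From mathcomp Require Import zify.
Set Implicit Arguments. Unset Strict Implicit. Unset Printing Implicit Defensive.

Lemma isolatedP m n (Y : gbm m n) (S : {set 'I_m * 'I_n}) :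
  reflect ((forall p, p \in S -> p \in supp Y) /\
           (forall p q, p \in S -> q \in S -> p != q -> ~~ common_rect Y p q))
          (isolated Y S).
Proof.
apply: (iffP andP) => [[/subsetP h1 /forallP h2]|[h1 h2]]; split.
- exact: h1.
- move=> p q hp hq; move: (h2 p); rewrite hp /= => /forallP /(_ q).
  by rewrite hq /= => /implyP.
- by apply/subsetP.
- apply/forallP => p; apply/implyP => hp; apply/forallP => q; apply/implyP => hq.
  by apply/implyP; apply: h2.
Qed.

Lemma cr_nz m n (Y : gbm m n) (p q : 'I_m * 'I_n) : common_rect Y p q ->
  ~~ is_zero (Y p.1 q.2) /\ ~~ is_zero (Y q.1 p.2).
Proof.
case/existsP=> A /existsP [B /and5P [hR h1 h2 h3 h4]].
have H : forall i j, i \in A -> j \in B -> ~~ is_zero (Y i j).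
  move=> i j hi hj; move/forallP: hR => /(_ i); rewrite hi /= => /forallP /(_ j).
  by rewrite hj.
by split; apply: H.
Qed.

Lemma br_le m n (Y : gbm m n) (F : {set {set 'I_m} * {set 'I_n}}) : rect_cover Y F -> br Y <= #|F|.
Proof.
move=> hF; rewrite /br -big_filter.
have: F \in [seq x <- index_enum {set {set 'I_m} * {set 'I_n}} | rect_cover Y x].
  by rewrite mem_filter hF mem_index_enum.
elim: (filter _ _) => // a r IH; rewrite inE big_cons => /orP [/eqP <-|/IH h].
  exact: geq_minl.
exact: leq_trans (geq_minr _ _) h.
Qed.

Lemma br_ind m n (Y : gbm m n) (K : nat -> Prop) : K #|supp Y| ->
  (forall F, rect_cover Y F -> K #|F|) -> (forall a b, K a -> K b -> K (minn a b)) ->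
  K (br Y).
Proof. by move=> h0 h1 h2; rewrite /br; apply: big_ind. Qed.

Lemma cover1 m n (Y : gbm m n) : exists F, rect_cover Y F /\ #|F| <= #|supp Y|.
Proof.
exists ((fun p : 'I_m * 'I_n => ([set p.1], [set p.2])) @: supp Y); split;
  last exact: leq_imset_card.
apply/andP; split.
- apply/forallP => R; apply/implyP => /imsetP [p hp ->] /=.
  apply/forallP=> i; apply/implyP; rewrite inE=>/eqP->.
  apply/forallP=> j; apply/implyP; rewrite inE=>/eqP->.
  by move: hp; rewrite inE; case: (Y _ _).
- apply/forallP=> p; apply/implyP=> hp; apply/existsP; exists ([set p.1],[set p.2]).
  by rewrite imset_f //= !inE !eqxx.
Qed.

Lemma two_nz (T : finType) (P : pred T) x y : x != y -> P x -> P y ->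
  2 <= #|[set z | P z]|.
Proof.
move=> hxy hx hy; have := cards2 x y; rewrite hxy => <-.
by apply: subset_leq_card; apply/subsetP=> z; rewrite !inE => /orP [/eqP->|/eqP->].
Qed.

Section Aux.
Variables (m n : nat) (Y : gbm m n) (I : {set 'I_m}) (J : {set 'I_n}).
Local Notation Z := (submx_gbm Y I J).

Definition emb (p : 'I_#|I| * 'I_#|J|) : 'I_m * 'I_n := (enum_val p.1, enum_val p.2).

Lemma Z_E a b : Z a b = Y (enum_val a) (enum_val b).
Proof. by rewrite /submx_gbm mxE. Qed.

Lemma emb_inj : injective emb.
Proof. by move=> [a b] [c d] [] /= /enum_val_inj -> /enum_val_inj ->. Qed.

Lemma supp_emb p : (emb p \in supp Y) = (p \in supp Z).
Proof. by rewrite !inE /= Z_E. Qed.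

Lemma common_rect_emb p q : common_rect Y (emb p) (emb q) -> common_rect Z p q.
Proof.
case/existsP=> A /existsP [B /and5P [hR h1 h2 h3 h4]].
apply/existsP; exists [set a | enum_val a \in A].
apply/existsP; exists [set b | enum_val b \in B].
rewrite !inE h1 h2 h3 h4 !andbT.
apply/forallP=> a; apply/implyP; rewrite inE => ha.
apply/forallP=> b; apply/implyP; rewrite inE=> hb.
rewrite Z_E; move/forallP: hR => /(_ (enum_val a)); rewrite ha /= => /forallP /(_ (enum_val b)).
by rewrite hb.
Qed.

Lemma iso_lower (X : {set 'I_m * 'I_n}) :
  isolated Y X ->
  (forall p, p \in X -> ~~ ((p.1 \in I) && (p.2 \in J))) ->
  (forall p q, p \in X -> q \in supp Z ->
     ~~ common_rect Y p (emb q) && ~~ common_rect Y (emb q) p) ->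
  iso_num Z + #|X| <= iso_num Y.
Proof.
move=> /isolatedP [hX1 hX2] hXd hXc.
suff H : forall S, isolated Z S -> #|S| + #|X| <= iso_num Y.
  have h0 : #|X| <= iso_num Y by have := H set0; rewrite cards0; apply; apply/isolatedP; split => p; rewrite inE.
  have : iso_num Z <= iso_num Y - #|X|.
    by apply/bigmax_leqP => S hS; move: (H S hS); lia.
  lia.
move=> S /isolatedP [hS1 hS2].
have hdis : emb @: S :&: X = set0.
  apply/setP => x; rewrite !inE; apply/negP => /andP [/imsetP [p hp ->] hx].
  by move: (hXd _ hx); rewrite /= !enum_valP.
have hcard : #|emb @: S :|: X| = #|S| + #|X|.
  by have := cardsUI (emb @: S) X; rewrite hdis cards0 addn0 card_imset //; exact: emb_inj.
rewrite -hcard /iso_num; apply: (@leq_bigmax_cond _ (fun S => isolated Y S) (fun S => #|S|)).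
apply/isolatedP; split.
- move=> x; rewrite inE => /orP [/imsetP [p hp ->]|hx]; last exact: hX1.
  by rewrite supp_emb hS1.
- move=> x y; rewrite !inE => /orP [/imsetP [p hp ->]|hx] /orP [/imsetP [q hq ->]|hy] hxy.
  + apply/negP => /common_rect_emb; apply/negP; apply: hS2 => //.
    by apply: contraNneq hxy => ->.
  + by case/andP: (hXc _ _ hy (hS1 _ hp)).
  + by case/andP: (hXc _ _ hx (hS1 _ hq)).
  + exact: hX2.
Qed.

Lemma br_upper (G : {set {set 'I_m} * {set 'I_n}}) :
  [forall R in G, is_rect Y R.1 R.2] ->
  (forall p, p \in supp Y -> ~~ ((p.1 \in I) && (p.2 \in J)) ->
     exists2 R, R \in G & (p.1 \in R.1) && (p.2 \in R.2)) ->
  br Y <= br Z + #|G|.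
Proof.
move=> hG hcov.
have key : forall F, rect_cover Z F -> br Y <= #|F| + #|G|.
  move=> F /andP [hF hFc].
  pose f := fun R : {set 'I_#|I|} * {set 'I_#|J|} =>
    ([set enum_val x | x in R.1], [set enum_val y | y in R.2]).
  apply: leq_trans (br_le (F := f @: F :|: G) _) _.
  - apply/andP; split.
    + apply/forallP => R; apply/implyP; rewrite inE => /orP [/imsetP [R' hR' ->]|hR];
        last by move/forallP: hG => /(_ R); rewrite hR.
      apply/forallP=> i; apply/implyP => /imsetP [a ha ->].
      apply/forallP => j; apply/implyP => /imsetP [b hb ->].
      rewrite -Z_E; move/forallP: hF => /(_ R'); rewrite hR' => /forallP /(_ a).
      by rewrite ha => /forallP /(_ b); rewrite hb.
    + apply/forallP => p; apply/implyP => hp.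
      case hIJ: ((p.1 \in I) && (p.2 \in J)).
      * case/andP: hIJ => h1 h2.
        pose a := enum_rank_in h1 p.1. pose b := enum_rank_in h2 p.2.
        have ea : enum_val a = p.1 by rewrite /a enum_rankK_in.
        have eb : enum_val b = p.2 by rewrite /b enum_rankK_in.
        have hab : (a, b) \in supp Z by rewrite inE /= Z_E ea eb; move: hp; rewrite inE.
        move/forallP: hFc => /(_ (a,b)); rewrite hab /= => /existsP [R' /andP [hR' /andP [ha hb]]].
        apply/existsP; exists (f R'); rewrite inE imset_f //=.
        by rewrite -ea -eb !imset_f.
      * have [R hR hpR] := hcov p hp (negbT hIJ).
        by apply/existsP; exists R; rewrite inE hR orbT.
  - apply: leq_trans (leq_card_setU _ _) _.
    by rewrite leq_add2r leq_imset_card.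
apply: (br_ind (K := fun x => br Y <= x + #|G|)).
- have [F1 [hF1 hc]] := cover1 Z.
  by apply: leq_trans (key F1 hF1) _; rewrite leq_add2r.
- exact: key.
- move=> a b ha hb; lia.
Qed.
End Aux.

Lemma contra_sub m n (Y : gbm m n) (I : {set 'I_m}) (J : {set 'I_n})
  (X : {set 'I_m * 'I_n}) (G : {set {set 'I_m} * {set 'I_n}}) :
  minimally_non_firm Y -> Defs.proper_sub I J ->
  isolated Y X ->
  (forall p, p \in X -> ~~ ((p.1 \in I) && (p.2 \in J))) ->
  (forall p q, p \in X -> q \in supp (submx_gbm Y I J) ->
     ~~ common_rect Y p (emb q) && ~~ common_rect Y (emb q) p) ->
  [forall R in G, is_rect Y R.1 R.2] ->
  (forall p, p \in supp Y -> ~~ ((p.1 \in I) && (p.2 \in J)) ->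
     exists2 R, R \in G & (p.1 \in R.1) && (p.2 \in R.2)) ->
  #|G| <= #|X| -> False.
Proof.
move=> [hlt hsub] hp hX hXd hXc hG hcov hGX.
have h1 := iso_lower hX hXd hXc.
have h2 := br_upper hG hcov.
have := hsub I J hp; lia.
Qed.

Lemma neq_setC1 (T : finType) (x : T) : [set~ x] != setT.
Proof. by apply/eqP => h; move: (in_setT x); rewrite -h !inE eqxx. Qed.

Theorem lemma5 (m n : nat) (Y : gbm m n) :
  minimally_non_firm Y ->
  (forall i : 'I_m, 2 <= #|[set j : 'I_n | ~~ is_zero (Y i j)]|) /\
  (forall j : 'I_n, 2 <= #|[set i : 'I_m | ~~ is_zero (Y i j)]|).
Proof.
move=> hY; split.
- move=> i; rewrite leqNgt; apply/negP => hN.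
  case: (boolP [exists j, is_one (Y i j)]) => [/existsP [j0 hj0]|hno].
  + apply: (@contra_sub _ _ Y setT [set~ j0] [set (i,j0)]
              [set ([set k | ~~ is_zero (Y k j0)], [set j0])] hY).
    * by rewrite /Defs.proper_sub neq_setC1 orbT.
    * apply/isolatedP; split=> [p|p q]; rewrite !inE.
        by move/eqP->.
      by move=> /eqP-> /eqP->; rewrite eqxx.
    * by move=> p; rewrite !inE => /eqP-> /=; rewrite eqxx.
    * move=> p q; rewrite inE => /eqP-> _.
      have hq2 : enum_val q.2 != j0 by have := enum_valP q.2; rewrite !inE.
      have nz0 : ~~ is_zero (Y i j0) by move: hj0; case: (Y i j0).
      apply/andP; split; apply/negP => /cr_nz [h1 h2] /=;
        move: hN; rewrite ltnNge => /negP; apply.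
      - exact: (two_nz hq2 h1 nz0).
      - exact: (two_nz hq2 h2 nz0).
    * apply/forallP => R; apply/implyP; rewrite inE => /eqP-> /=.
      apply/forallP => k; apply/implyP; rewrite inE => hk.
      by apply/forallP => j; apply/implyP; rewrite inE => /eqP->.
    * move=> p hp; rewrite !inE /= negbK => /eqP hp2.
      exists ([set k | ~~ is_zero (Y k j0)], [set j0]); first by rewrite inE.
      by rewrite /= !inE -hp2 eqxx andbT; move: hp; rewrite inE; case: (Y _ _).
    * by rewrite !cards1.
  + apply: (@contra_sub _ _ Y [set~ i] setT set0 set0 hY).
    * by rewrite /Defs.proper_sub neq_setC1.
    * by apply/isolatedP; split=> [p|p q]; rewrite inE.
    * by move=> p; rewrite inE.
    * by move=> p q; rewrite inE.
    * by apply/forallP => R; rewrite inE.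
    * move=> p hp; rewrite !inE /= andbT negbK => /eqP hp1.
      move/existsP: hno; case; exists p.2; by move: hp; rewrite inE -hp1.
    * by rewrite cards0.
- move=> j; rewrite leqNgt; apply/negP => hN.
  case: (boolP [exists i, is_one (Y i j)]) => [/existsP [i0 hi0]|hno].
  + apply: (@contra_sub _ _ Y [set~ i0] setT [set (i0,j)]
              [set ([set i0], [set k | ~~ is_zero (Y i0 k)])] hY).
    * by rewrite /Defs.proper_sub neq_setC1.
    * apply/isolatedP; split=> [p|p q]; rewrite !inE.
        by move/eqP->.
      by move=> /eqP-> /eqP->; rewrite eqxx.
    * by move=> p; rewrite !inE => /eqP-> /=; rewrite eqxx.
    * move=> p q; rewrite inE => /eqP-> _.
      have hq1 : enum_val q.1 != i0 by have := enum_valP q.1; rewrite !inE.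
      have nz0 : ~~ is_zero (Y i0 j) by move: hi0; case: (Y i0 j).
      apply/andP; split; apply/negP => /cr_nz [h1 h2] /=;
        move: hN; rewrite ltnNge => /negP; apply.
      - exact: (two_nz (P := fun k => ~~ is_zero (Y k j)) hq1 h2 nz0).
      - exact: (two_nz (P := fun k => ~~ is_zero (Y k j)) hq1 h1 nz0).
    * apply/forallP => R; apply/implyP; rewrite inE => /eqP-> /=.
      apply/forallP => k; apply/implyP; rewrite inE => /eqP->.
      by apply/forallP => l; apply/implyP; rewrite inE.
    * move=> p hp; rewrite !inE /= andbT negbK => /eqP hp1.
      exists ([set i0], [set k | ~~ is_zero (Y i0 k)]); first by rewrite inE.
      by rewrite /= !inE -hp1 eqxx /=; move: hp; rewrite inE; case: (Y _ _).
    * by rewrite !cards1.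
  + apply: (@contra_sub _ _ Y setT [set~ j] set0 set0 hY).
    * by rewrite /Defs.proper_sub neq_setC1 orbT.
    * by apply/isolatedP; split=> [p|p q]; rewrite inE.
    * by move=> p; rewrite inE.
    * by move=> p q; rewrite inE.
    * by apply/forallP => R; rewrite inE.
    * move=> p hp; rewrite !inE /= negbK => /eqP hp2.
      move/existsP: hno; case; exists p.1; by move: hp; rewrite inE -hp2.
    * by rewrite cards0.
Qed.
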